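(* Let $N\in\mathbb{N}$, let $\omega_0$ be a centered one-dimensional Gaussian distribution, and let $h$ be the smallest integer with $N\le2^h$. Consider a complete binary tree of depth $h$ (with $2^h$ leaves, ordered left to right), and attach random variables $\alpha_v$ to its nodes as follows: the root's variable is distributed as a sum of $2^h$ independent $\omega_0$-variables; proceeding layer by layer, if $w$ has children $u$ (left) and $v$ (right) and $\alpha_w$ has been sampled with value $a$, where $\alpha_w$ is distributed as a sum of $2^l$ independent $\omega_0$-variables, then $(\alpha_u,\alpha_v)$ is sampled (using fresh independent randomness) from the conditional distribution of $(Y_1,Y_2)$ given $Y_1+Y_2=a$, where $Y_1,Y_2$ are independent and each is a sum of $2^{l-1}$ independent $\omega_0$-variables (so $\alpha_v=a-\alpha_u$). For $x\in\{0,1,\dots,N\}$ let $\alpha^x$ be the sum of the variables attached to the first $x$ leaves. Let $\omega\in\mathbb{R}^N$ have i.i.d. coordinates with distribution $\omega_0$, and let $\pi_1(x)\in\mathbb{R}^N$ be the vector whose first $x$ entries equal $1$ and whose remaining entries equal $0$. Then the joint distribution of $(\alpha^x)_{x=0,1,\dots,N}$ equals the joint distribution of $(\langle\omega,\pi_1(x)\rangle)_{x=0,1,\dots,N}$.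
   Context: All sampling is assumed exact (no simulation bias). *)

(* Defs.v *)
From HB Require Import structures.
From mathcomp Require Import all_boot all_order all_algebra.
From mathcomp Require Import all_classical all_reals all_analysis.
Set Implicit Arguments. Unset Strict Implicit. Unset Printing Implicit Defensive.
Import Order.TTheory GRing.Theory Num.Theory.
Import numFieldNormedType.Exports.
Local Open Scope classical_set_scope.
Local Open Scope ring_scope.

Section defs.
Context {R : realType}.

Definition omega0 (sigma : R) : set R -> \bar R := normal_prob 0 sigma.

Definition iid_omega0 {d} {T : measurableType d} (P : probability T R)
    (sigma : R) (n : nat) (Z : 'I_n -> T -> R) : Prop :=
  [/\ (forall i, measurable_fun [set: T] (Z i)),
      (forall i (B : set R), measurable B ->
          P (Z i @^-1` B) = omega0 sigma B) &
      (forall B : 'I_n -> set R, (forall i, measurable (B i)) ->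
          P (\bigcap_(i : 'I_n) (Z i @^-1` B i))
          = (\prod_(i < n) P (Z i @^-1` B i))%E)].

Definition law_of_iid_sum (sigma : R) (k : nat) (mu : set R -> \bar R) : Prop :=
  exists (d : measure_display) (T : measurableType d) (P : probability T R)
         (Z : 'I_k -> T -> R),
    iid_omega0 P sigma Z /\
    forall B : set R, measurable B ->
      mu B = P ((fun t => \sum_(i < k) Z i t) @^-1` B).

Definition is_cond_distr {d} {T : measurableType d} (P : probability T R)
    (S : T -> R) (X : T -> (R * R)%type)
    (K : R -> set (R * R)%type -> \bar R) : Prop :=
  forall (A : set R) (B : set (R * R)%type), measurable A -> measurable B ->
    P (S @^-1` A `&` X @^-1` B) = (\int[P]_(t in S @^-1` A) K (S t) B)%E.

Definition is_split_cond_distr (sigma : R) (m : nat)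
    (K : R -> set (R * R)%type -> \bar R) : Prop :=
  exists (d : measure_display) (T : measurableType d) (P : probability T R)
         (Z : 'I_(m + m) -> T -> R),
    iid_omega0 P sigma Z /\
    let Y1 := fun t => \sum_(i < m + m | (i < m)%N) Z i t in
    let Y2 := fun t => \sum_(i < m + m | (m <= i)%N) Z i t in
    is_cond_distr P (fun t => Y1 t + Y2 t) (fun t => (Y1 t, Y2 t)) K.

(* Binary tree of depth h in heap numbering: root = 1, children of node k
   are 2k (left) and 2k+1 (right); level l consists of nodes 2^l..2^(l+1)-1
   (ordered left to right); the leaves are 2^h + i, i < 2^h.
   [tree_prefix alpha l t] = values of all nodes of levels <= l. *)
Definition tree_prefix {T : Type} (alpha : nat -> T -> R) (l : nat) (t : T)
  : (2 ^ l.+1 - 1).-tuple R :=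
  [tuple alpha i.+1 t | i < 2 ^ l.+1 - 1].

Definition pi1 (N x : nat) : 'I_N -> R := fun i => if (i < x)%N then 1 else 0.

Definition dotN (N : nat) (u v : 'I_N -> R) : R := \sum_(i < N) u i * v i.

End defs.
Arguments pi1 {R} N x.

(* Main.v *)
Require Import Defs.
From HB Require Import structures.
From mathcomp Require Import all_boot all_order all_algebra.
From mathcomp Require Import all_classical all_reals all_analysis.
Import Order.TTheory GRing.Theory Num.Theory.
Import numFieldNormedType.Exports.
Local Open Scope classical_set_scope.
Local Open Scope ring_scope.

From mathcomp Require Import measurable_realfun.
From mathcomp Require Import zify.

Section aux.
Context {R : realType}.
Local Open Scope ereal_scope.

Definition rect n (B : 'I_n -> set R) : set (n.-tuple R) :=
  [set t | forall i, B i (tnth t i)].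
Arguments rect {n}.
Definition rects n : set (set (n.-tuple R)) :=
  [set A | exists B : 'I_n -> set R, (forall i, measurable (B i)) /\ A = rect B].

Lemma rect_measurable n (B : 'I_n -> set R) :
  (forall i, measurable (B i)) -> measurable (rect B).
Proof.
move=> mB.
have -> : rect B = \bigcap_(i in [set: 'I_n]) ((@tnth n R)^~ i @^-1` B i).
  by apply/seteqP; split => [t Ht i _|t Ht i]; [exact: Ht|exact: Ht].
apply: fin_bigcap_measurable; first exact: finite_finset.
move=> i _.
by rewrite -[X in measurable X]setTI; apply: measurable_tnth.
Qed.

Lemma rects_gen n : (measurable : set (set (n.-tuple R))) = <<s (rects n) >>.
Proof.
apply/seteqP; split; last first.
  apply: smallest_sub; first exact: sigma_algebra_measurable.
  by move=> A [B [mB ->]]; exact: rect_measurable.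
apply: smallest_sub; first exact: smallest_sigma_algebra.
case: n => [|n]; first by rewrite big_ord0.
rewrite -bigcup_mkord_ord => A [i Ii [B mB <-]].
apply: sub_sigma_algebra; exists (fun j : 'I_n.+1 => if j == inord i then B else setT).
split; first by move=> j; case: ifP.
apply/seteqP; split => [t [_ Bt] j|t Ht]; first by case: ifPn => // /eqP ->.
by split => //; have := Ht (inord i); rewrite eqxx.
Qed.

Lemma rects_setI n : setI_closed (rects n).
Proof.
move=> A1 A2 [B1 [mB1 ->]] [B2 [mB2 ->]].
exists (fun i => B1 i `&` B2 i); split; first by move=> i; exact: measurableI.
by apply/seteqP; split => t; [move=> [H1 H2] i; split|move=> H; split => i; case: (H i)].
Qed.

Lemma rects_setT n : rects n setT.
Proof.
exists (fun=> setT); split => //.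
by apply/seteqP; split.
Qed.

Lemma uniq_tuple n (m1 m2 : {measure set (n.-tuple R) -> \bar R}) :
  m1 setT < +oo ->
  (forall B : 'I_n -> set R, (forall i, measurable (B i)) -> m1 (rect B) = m2 (rect B)) ->
  forall A, measurable A -> m1 A = m2 A.
Proof.
move=> fin12 H A mA.
apply: (measure_unique (rects n) (fun=> setT)) => //.
- exact: rects_gen.
- exact: rects_setI.
- by move=> _; exact: rects_setT.
- by rewrite bigcup_const.
- by move=> _ [B [mB ->]]; exact: H.
Qed.

End aux.
Arguments rect {R n}.
Arguments rects {R}.

Section aux2.
Context {R : realType}.
Local Open Scope ereal_scope.

Definition mk_mfun {d1 d2} {T1 : measurableType d1} {T2 : measurableType d2}
  (f : T1 -> T2) (mf : measurable_fun setT f) : {mfun T1 >-> T2} :=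
  mfun_Sub (mem_set mf : f \in mfun).
Arguments mk_mfun {d1 d2 T1 T2 f}.

Lemma mk_mfunE {d1 d2} {T1 : measurableType d1} {T2 : measurableType d2}
  (f : T1 -> T2) (mf : measurable_fun setT f) x : mk_mfun mf x = f x.
Proof. by []. Qed.

Definition pfw {d1 d2} {T1 : measurableType d1} {T2 : measurableType d2}
  (m : {measure set T1 -> \bar R}) (f : {mfun T1 >-> T2}) := pushforward m f.

Section pfw_measure.
Context {d1 d2} {T1 : measurableType d1} {T2 : measurableType d2}
  (m : {measure set T1 -> \bar R}) (f : {mfun T1 >-> T2}).
Let pfw0 : pfw m f set0 = 0.
Proof. by rewrite /pfw /pushforward preimage_set0 measure0. Qed.
Let pfw_ge0 A : 0 <= pfw m f A.
Proof. exact: measure_ge0. Qed.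
Let pfw_sigma_additive : semi_sigma_additive (pfw m f).
Proof.
move=> F mF tF mUF; rewrite /pfw /pushforward preimage_bigcup.
apply: measure_semi_sigma_additive.
- by move=> n; rewrite -[X in measurable X]setTI; exact: measurable_funP.
- apply/trivIsetP => /= i j _ _ ij; rewrite -preimage_setI.
  by move/trivIsetP : tF => /(_ _ _ _ _ ij) ->//; rewrite preimage_set0.
- by rewrite -preimage_bigcup -[X in measurable X]setTI; exact: measurable_funP.
Qed.
HB.instance Definition _ := isMeasure.Build _ _ _
  (pfw m f) pfw0 pfw_ge0 pfw_sigma_additive.
End pfw_measure.

Definition vec {T : Type} n (X : 'I_n -> T -> R) (t : T) : n.-tuple R :=
  [tuple X i t | i < n].
Arguments vec {T n}.

Lemma measurable_vec {d} {T : measurableType d} {n} {X : 'I_n -> T -> R} :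
  (forall i, measurable_fun setT (X i)) -> measurable_fun setT (vec X).
Proof.
move=> mX; apply/measurable_fun_tnthP => i.
have -> : (@tnth n R)^~ i \o vec X = X i.
  by apply: funext => t /=; rewrite tnth_mktuple.
exact: mX.
Qed.

Lemma vec_rect {T : Type} {n} (X : 'I_n -> T -> R) (B : 'I_n -> set R) :
  vec X @^-1` rect B = \bigcap_(i in [set: 'I_n]) (X i @^-1` B i).
Proof.
apply/seteqP; split => [t Ht i _|t Ht i]; first by have := Ht i; rewrite tnth_mktuple.
by rewrite /vec tnth_mktuple; exact: Ht.
Qed.

Lemma law_rect {d1 d2} {T1 : measurableType d1} {T2 : measurableType d2}
  (P1 : probability T1 R) (P2 : probability T2 R) {n}
  (X1 : 'I_n -> T1 -> R) (X2 : 'I_n -> T2 -> R) :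
  (forall i, measurable_fun setT (X1 i)) -> (forall i, measurable_fun setT (X2 i)) ->
  (forall B : 'I_n -> set R, (forall i, measurable (B i)) ->
     P1 (\bigcap_(i in [set: 'I_n]) (X1 i @^-1` B i)) =
     P2 (\bigcap_(i in [set: 'I_n]) (X2 i @^-1` B i))) ->
  forall A, measurable A -> P1 (vec X1 @^-1` A) = P2 (vec X2 @^-1` A).
Proof.
move=> mX1 mX2 H A mA.
have := @uniq_tuple R n (distribution P1 (mk_mfun (measurable_vec mX1)))
   (distribution P2 (mk_mfun (measurable_vec mX2))) _ _ A mA.
apply.
- apply: (le_lt_trans (probability_le1 _ _)) => //; exact: ltry.
- move=> B mB.
  change (P1 (vec X1 @^-1` rect B) = P2 (vec X2 @^-1` rect B)).
  by rewrite !vec_rect; exact: H.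
Qed.

End aux2.
Arguments mk_mfun {d1 d2 T1 T2 f}.
Arguments vec {R T n}.


Section indep.
Context {R : realType} {d} {T : measurableType d} (P : probability T R).
Local Open Scope ereal_scope.

Definition indep_prod {n} (X : 'I_n -> T -> R) :=
  forall B : 'I_n -> set R, (forall i, measurable (B i)) ->
    P (\bigcap_(i in [set: 'I_n]) (X i @^-1` B i)) = \prod_(i < n) P (X i @^-1` B i).

Lemma rect_setT {n} : rect (fun _ : 'I_n => (setT : set R)) = setT.
Proof. by apply/seteqP; split. Qed.

Lemma Pfin (A : set T) : measurable A -> (fine (P A))%:E = P A.
Proof. by move=> mA; rewrite fineK // fin_num_measure. Qed.

Lemma preimX {d'} {U : measurableType d'} (f : T -> U) A : measurable_fun setT f -> measurable A ->
  measurable (f @^-1` A).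
Proof. by move=> mf mA; rewrite -[X in measurable X]setTI; exact: mf. Qed.

Section block.
Context {a b : nat} (X : 'I_(a + b) -> T -> R)
  (mX : forall i, measurable_fun setT (X i)) (iX : indep_prod X).

Let X1 := fun i : 'I_a => X (lshift b i).
Let X2 := fun i : 'I_b => X (rshift a i).
Let mX1 i : measurable_fun setT (X1 i). Proof. exact: mX. Qed.
Let mX2 i : measurable_fun setT (X2 i). Proof. exact: mX. Qed.
Let mV1 := measurable_vec mX1.
Let mV2 := measurable_vec mX2.

Lemma block_rect B1 B2 : (forall i, measurable (B1 i)) -> (forall i, measurable (B2 i)) ->
  P (vec X1 @^-1` rect B1 `&` vec X2 @^-1` rect B2) =
  (\prod_(j < a) P (X1 j @^-1` B1 j)) * \prod_(k < b) P (X2 k @^-1` B2 k).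
Proof.
move=> mB1 mB2.
pose C i := match fintype.split i with inl j => B1 j | inr k => B2 k end.
have mC i : measurable (C i) by rewrite /C; case: fintype.split.
have -> : vec X1 @^-1` rect B1 `&` vec X2 @^-1` rect B2 =
    \bigcap_(i in [set: 'I_(a + b)]) (X i @^-1` C i).
  apply/seteqP; split => [t [H1 H2] i _|t H].
    rewrite !vec_rect in H1 H2.
    by rewrite /C; case: split_ordP => [j ->|k ->]; [exact: H1|exact: H2].
  rewrite !vec_rect; split => [j _|k _].
    by have := H (lshift b j) I; rewrite /C (@unsplitK a b (inl j)).
  by have := H (rshift a k) I; rewrite /C (@unsplitK a b (inr k)).
rewrite iX // big_split_ord /=.
congr (_ * _); apply: eq_bigr => i _; rewrite /C.
  by rewrite (@unsplitK a b (inl i)).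
by rewrite (@unsplitK a b (inr i)).
Qed.

Lemma block_rect1 B1 : (forall i, measurable (B1 i)) ->
  P (vec X1 @^-1` rect B1) = \prod_(j < a) P (X1 j @^-1` B1 j).
Proof.
move=> mB1.
have := block_rect B1 (fun=> setT) mB1 (fun=> measurableT).
rewrite rect_setT preimage_setT setIT => ->.
rewrite [X in _ * X]big1 ?mule1// => k _.
by rewrite preimage_setT probability_setT.
Qed.

Lemma block_rect2 B2 : (forall i, measurable (B2 i)) ->
  P (vec X2 @^-1` rect B2) = \prod_(k < b) P (X2 k @^-1` B2 k).
Proof.
move=> mB2.
have := block_rect (fun=> setT) B2 (fun=> measurableT) mB2.
rewrite rect_setT preimage_setT setTI => ->.
rewrite [X in X * _]big1 ?mul1e// => k _.
by rewrite preimage_setT probability_setT.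
Qed.

Let step2 B1 A2 : (forall i, measurable (B1 i)) -> measurable A2 ->
  P (vec X2 @^-1` A2 `&` vec X1 @^-1` rect B1) =
  P (vec X1 @^-1` rect B1) * P (vec X2 @^-1` A2).
Proof.
move=> mB1 mA2.
have mE1 : measurable (vec X1 @^-1` rect B1) by apply: preimX => //; exact: rect_measurable.
have H := @uniq_tuple R b (pfw (mrestr P mE1) (mk_mfun mV2))
   (mscale (NngNum (fine_ge0 (measure_ge0 P (vec X1 @^-1` rect B1)))) (pfw P (mk_mfun mV2))).
rewrite /pfw /pushforward /= in H; unfold mrestr, mscale in H; simpl in H.
rewrite -(Pfin _ mE1); apply: H => //.
- apply: (le_lt_trans (probability_le1 _ _)); last exact: ltry.
  by apply: measurableI => //; apply: preimX.
- move=> B2 mB2.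
  rewrite Pfin // setIC block_rect // block_rect1 // block_rect2 //.
Qed.

Lemma block_indep A1 A2 : measurable A1 -> measurable A2 ->
  P (vec X1 @^-1` A1 `&` vec X2 @^-1` A2) =
  P (vec X1 @^-1` A1) * P (vec X2 @^-1` A2).
Proof.
move=> mA1 mA2.
have mE2 : measurable (vec X2 @^-1` A2) by apply: preimX.
have H := @uniq_tuple R a (pfw (mrestr P mE2) (mk_mfun mV1))
   (mscale (NngNum (fine_ge0 (measure_ge0 P (vec X2 @^-1` A2)))) (pfw P (mk_mfun mV1))).
rewrite /pfw /pushforward /= in H; unfold mrestr, mscale in H; simpl in H.
rewrite muleC -(Pfin _ mE2); apply: H => //.
- apply: (le_lt_trans (probability_le1 _ _)); last exact: ltry.
  by apply: measurableI => //; apply: preimX.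
- by move=> B1 mB1; rewrite Pfin // setIC step2 // muleC.
Qed.

End block.
End indep.

Section expect.
Context {R : realType} {d} {T : measurableType d} (P : probability T R).
Local Open Scope ereal_scope.

Lemma E_indep2 {k} (U : T -> R) (V : T -> k.-tuple R)
  (mU : measurable_fun setT U) (mV : measurable_fun setT V) :
  (forall A A', measurable A -> measurable A' ->
     P (U @^-1` A `&` V @^-1` A') = P (U @^-1` A) * P (V @^-1` A')) ->
  forall (f : R -> \bar R) (g : k.-tuple R -> \bar R),
  measurable_fun setT f -> measurable_fun setT g ->
  (forall x, 0 <= f x) -> (forall x, 0 <= g x) ->
  \int[P]_t (f (U t) * g (V t)) = \int[P]_t f (U t) * \int[P]_t g (V t).
Proof.
move=> H f g mf mg f0 g0.
have mW := measurable_fun_pair mU mV.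
pose muU := distribution P (mk_mfun mU).
pose muV := distribution P (mk_mfun mV).
pose law := distribution P (mk_mfun mW).
pose F := fun z : R * k.-tuple R => f z.1 * g z.2.
have mF : measurable_fun setT F.
  apply: emeasurable_funM.
    exact: (measurableT_comp mf measurable_fst).
  exact: (measurableT_comp mg measurable_snd).
have F0 z : 0 <= F z by apply: mule_ge0.
have -> : \int[P]_t (f (U t) * g (V t)) = \int[law]_z F z.
  by rewrite ge0_integral_distribution.
have -> : \int[law]_z F z = \int[(muU \x muV)%E]_z F z.
  apply: eq_measure_integral => S mS _.
  apply/esym; apply: product_measure_unique => // A A' mA mA'.
rewrite fubini_tonelli1 //.
rewrite /fubini_F.
have -> : \int[muU]_x \int[muV]_y F (x, y) = \int[muU]_x (f x * \int[muV]_y g y).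
  apply: eq_integral => x _; rewrite /F /=.
  by rewrite ge0_integralZl.
rewrite ge0_integralZr //; last exact: integral_ge0.
by rewrite !ge0_integral_distribution.
Qed.

End expect.

Section expect2.
Context {R : realType} {d} {T : measurableType d} (P : probability T R).
Local Open Scope ereal_scope.

Lemma emeas_prod {d'} {U : measurableType d'} {I : Type} (s : seq I) (p : pred I)
  (h : I -> U -> \bar R) : (forall i, measurable_fun setT (h i)) ->
  measurable_fun setT (fun x => \prod_(i <- s | p i) h i x).
Proof.
move=> mh; elim: s => [|a s IH].
  have -> : (fun x => \prod_(i <- [::] | p i) h i x) = cst 1.
    by apply: funext => x; rewrite big_nil.
  exact: measurable_cst.
have -> : (fun x => \prod_(i <- a :: s | p i) h i x) =
   (fun x => (if p a then h a x else 1) * \prod_(i <- s | p i) h i x).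
  apply: funext => x; rewrite big_cons; case: (p a) => //; by rewrite mul1e.
apply: emeasurable_funM => //; case: (p a) => //; exact: measurable_cst.
Qed.

Lemma rshift1E {n} (i : 'I_n) : rshift 1 i = lift ord0 i.
Proof. by apply: val_inj. Qed.

Lemma E_prod {n} (X : 'I_n -> T -> R) (mX : forall i, measurable_fun setT (X i)) :
  indep_prod P X ->
  forall f : 'I_n -> R -> \bar R, (forall i, measurable_fun setT (f i)) ->
  (forall i x, 0 <= f i x) ->
  \int[P]_t (\prod_(i < n) f i (X i t)) = \prod_(i < n) \int[P]_t f i (X i t).
Proof.
elim: n X mX => [|n IH] X mX iX f mf f0.
  under eq_integral do rewrite big_ord0.
  rewrite big_ord0 integral_cst // mul1e; exact: probability_setT.
pose X' := fun i : 'I_n => X (rshift 1 i).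
have mX' i : measurable_fun setT (X' i) by exact: mX.
have iX' : indep_prod P X'.
  move=> B mB.
  have := @block_rect2 R d T P 1 n X iX B mB.
  by rewrite vec_rect.
have mV := measurable_vec mX'.
pose g := fun v : n.-tuple R => \prod_(i < n) f (lift ord0 i) (tnth v i).
have mg : measurable_fun setT g.
  rewrite /g; apply: emeas_prod => i.
  apply: measurableT_comp => //; exact: measurable_tnth.
have g0 v : 0 <= g v by apply: prode_ge0 => i _; exact: f0.
have -> : (fun t => \prod_(i < n.+1) f i (X i t)) =
          (fun t => f ord0 (X ord0 t) * g (vec X' t)).
  apply: funext => t; rewrite big_ord_recl; congr (_ * _).
  by apply: eq_bigr => i _; rewrite tnth_mktuple /X' rshift1E.
rewrite E_indep2 //; last first.
- move=> A A' mA mA'.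
  have := @block_indep R d T P 1 n X mX iX ((@tnth 1 R)^~ ord0 @^-1` A) A'.
  have -> : vec (fun i : 'I_1 => X (lshift n i)) @^-1` ((@tnth 1 R)^~ ord0 @^-1` A)
      = X ord0 @^-1` A.
    apply/seteqP; split => t /=; rewrite tnth_mktuple;
      by have -> : lshift n (ord0 : 'I_1) = ord0 by apply: val_inj.
  move=> ->//; apply: preimX => //; exact: measurable_tnth.
rewrite big_ord_recl; congr (_ * _).
have -> : \int[P]_t g (vec X' t) = \int[P]_t (\prod_(i < n) f (lift ord0 i) (X' i t)).
  by apply: eq_integral => t _; rewrite /g; apply: eq_bigr => i _; rewrite tnth_mktuple.
by rewrite (IH X' mX' iX' (fun i => f (lift ord0 i))) //; apply: eq_bigr => i _; rewrite /X' rshift1E.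
Qed.

End expect2.

Section iid.
Context {R : realType}.
Local Open Scope ereal_scope.

Definition sumt {k} (v : k.-tuple R) : R := (\sum_(i < k) tnth v i)%R.

Lemma measurable_sumt {k} : measurable_fun setT (@sumt k).
Proof. by apply: measurable_sum => i; exact: measurable_tnth. Qed.

Lemma vec_sumt {T : Type} {k} (Z : 'I_k -> T -> R) :
  sumt \o vec Z = (fun t => \sum_(i < k) Z i t)%R.
Proof. by apply: funext => t /=; rewrite /sumt; apply: eq_bigr => i _; rewrite tnth_mktuple. Qed.

Lemma sum_law {d1 d2} {T1 : measurableType d1} {T2 : measurableType d2}
  (P1 : probability T1 R) (P2 : probability T2 R) (sigma : R) {k}
  (Z1 : 'I_k -> T1 -> R) (Z2 : 'I_k -> T2 -> R) :
  iid_omega0 P1 sigma Z1 -> iid_omega0 P2 sigma Z2 ->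
  forall C, measurable C ->
  P1 ((fun t => \sum_(i < k) Z1 i t)%R @^-1` C) = P2 ((fun t => \sum_(i < k) Z2 i t)%R @^-1` C).
Proof.
move=> [mZ1 mg1 ip1] [mZ2 mg2 ip2] C mC.
have -> : (fun t => \sum_(i < k) Z1 i t)%R @^-1` C = vec Z1 @^-1` (sumt @^-1` C).
  by rewrite -(vec_sumt Z1).
have -> : (fun t => \sum_(i < k) Z2 i t)%R @^-1` C = vec Z2 @^-1` (sumt @^-1` C).
  by rewrite -(vec_sumt Z2).
apply: law_rect => //.
- move=> B mB; rewrite ip1 // ip2 //; apply: eq_bigr => i _.
  by rewrite mg1 // mg2.
- rewrite -[X in measurable X]setTI; exact: measurable_sumt.
Qed.

Lemma lawsum_eq (sigma : R) k mu : law_of_iid_sum sigma k mu ->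
  forall d' (T' : measurableType d') (P' : probability T' R) (Z' : 'I_k -> T' -> R),
  iid_omega0 P' sigma Z' -> forall C, measurable C ->
  mu C = P' ((fun t => \sum_(i < k) Z' i t)%R @^-1` C).
Proof.
move=> [d0 [T0 [P0 [Z0 [iZ0 muE]]]]] d' T' P' Z' iZ' C mC.
by rewrite muE //; exact: (sum_law _ _ _ _ _ iZ0 iZ').
Qed.

Lemma lawsum_setT (sigma : R) k mu : law_of_iid_sum sigma k mu -> mu setT = 1.
Proof.
move=> [d0 [T0 [P0 [Z0 [iZ0 muE]]]]].
by rewrite muE // preimage_setT probability_setT.
Qed.

Lemma iid_subl {d'} {T' : measurableType d'} (P' : probability T' R) sigma {a b}
  (Z : 'I_(a + b) -> T' -> R) :
  iid_omega0 P' sigma Z -> iid_omega0 P' sigma (fun i : 'I_a => Z (lshift b i)).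
Proof.
move=> [mZ mg ip]; split => [i|i C mC|B mB]; [exact: mZ|exact: mg|].
by have := @block_rect1 R d' T' P' a b Z ip B mB; rewrite vec_rect.
Qed.

Lemma iid_subr {d'} {T' : measurableType d'} (P' : probability T' R) sigma {a b}
  (Z : 'I_(a + b) -> T' -> R) :
  iid_omega0 P' sigma Z -> iid_omega0 P' sigma (fun i : 'I_b => Z (rshift a i)).
Proof.
move=> [mZ mg ip]; split => [i|i C mC|B mB]; [exact: mZ|exact: mg|].
by have := @block_rect2 R d' T' P' a b Z ip B mB; rewrite vec_rect.
Qed.

Lemma sum_splitl {T' : Type} {m} (Z : 'I_(m + m) -> T' -> R) t :
  (\sum_(i < m + m | (i < m)%N) Z i t = \sum_(i < m) Z (lshift m i) t)%R.
Proof.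
rewrite big_split_ord /= [X in (_ + X)%R]big_pred0 ?addr0.
  by apply: eq_bigl => i; rewrite ltn_ord.
by move=> i /=; rewrite ltnNge leq_addr.
Qed.

Lemma sum_splitr {T' : Type} {m} (Z : 'I_(m + m) -> T' -> R) t :
  (\sum_(i < m + m | (m <= i)%N) Z i t = \sum_(i < m) Z (rshift m i) t)%R.
Proof.
rewrite big_split_ord /= [X in (X + _)%R]big_pred0 ?add0r.
  by apply: eq_bigl => i; rewrite leq_addr.
by move=> i /=; rewrite leqNgt ltn_ord.
Qed.

Lemma sum_split {T' : Type} {m} (Z : 'I_(m + m) -> T' -> R) t :
  (\sum_(i < m + m | (i < m)%N) Z i t + \sum_(i < m + m | (m <= i)%N) Z i t
   = \sum_(i < m + m) Z i t)%R.
Proof. by rewrite sum_splitl sum_splitr big_split_ord. Qed.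

End iid.

Section natform.
Context {R : realType}.
Local Open Scope ereal_scope.

Definition natform {d} {T : measurableType d} (P : probability T R) (n : nat)
  (X : nat -> T -> R) (mu : set R -> \bar R) :=
  forall B : nat -> set R, (forall k, measurable (B k)) ->
    P (\bigcap_(j in `I_n) (X j @^-1` B j)) = \prod_(0 <= j < n) mu (B j).

Context {d} {T : measurableType d} (P : probability T R).

Lemma natform_ord {n X mu} : natform P n X mu ->
  forall B : 'I_n -> set R, (forall i, measurable (B i)) ->
  P (\bigcap_(j in [set: 'I_n]) (X j @^-1` B j)) = \prod_(j < n) mu (B j).
Proof.
move=> H B mB.
pose Bn k := oapp B setT (insub k : option 'I_n).
have mBn k : measurable (Bn k) by rewrite /Bn; case: insub => //=.
have := H Bn mBn; rewrite big_mkord.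
have -> : \prod_(i < n) mu (Bn i) = \prod_(i < n) mu (B i).
  by apply: eq_bigr => i _; rewrite /Bn valK.
move=> <-; congr (P _).
apply/seteqP; split => [t Ht k /= kn|t Ht j _].
  rewrite /Bn; case: insubP => [u _ uk|/negP//] /=.
  by rewrite -uk; exact: Ht.
by have := Ht j (ltn_ord j); rewrite /Bn valK.
Qed.

Lemma natform_marg {n X mu} : natform P n X mu -> mu setT = 1 ->
  forall (j : 'I_n) C, measurable C -> P (X j @^-1` C) = mu C.
Proof.
move=> H mu1 j C mC.
have := natform_ord H (fun i => if i == j then C else setT).
rewrite (bigD1 j) //= eqxx big1 ?mule1; last by move=> i /negbTE ->.
move=> <-; last by move=> i; case: ifP.
congr (P _); apply/seteqP; split => [t Ht i _|t Ht].
  by case: ifPn => [/eqP ->|].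
by have := Ht j I; rewrite eqxx.
Qed.

Lemma natform_indep {n X mu} : natform P n X mu -> mu setT = 1 ->
  indep_prod P (fun j : 'I_n => X j).
Proof.
move=> H mu1 B mB; rewrite (natform_ord H) //.
by apply: eq_bigr => i _; rewrite (natform_marg H).
Qed.

End natform.

Section reindex.
Context {R : realType}.
Local Open Scope ereal_scope.

Lemma prod_pairs (F : nat -> \bar R) k :
  \prod_(0 <= i < k.*2) F i = \prod_(0 <= j < k) (F j.*2 * F j.*2.+1).
Proof.
elim: k => [|k IH]; first by rewrite !big_geq.
rewrite doubleS big_nat_recr // big_nat_recr // big_nat_recr // IH.
by rewrite /= -muleA.
Qed.

Lemma cap_pairs {T : Type} (X Y1 Y2 : nat -> T -> R) k (B : nat -> set R) :
  (forall j, X j.*2 = Y1 j) -> (forall j, X j.*2.+1 = Y2 j) ->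
  \bigcap_(i in `I_(k.*2)) (X i @^-1` B i) =
  \bigcap_(j in `I_k) ((fun t => (Y1 j t, Y2 j t)) @^-1` (B j.*2 `*` B j.*2.+1)).
Proof.
move=> E1 E2; apply/seteqP; split => [t H j /= jk|t H i /= ik].
  split => /=.
    by rewrite -E1; apply: H => /=; lia.
  by rewrite -E2; apply: H => /=; lia.
have jk : (i./2 < k)%N by rewrite ltn_half_double.
have [/= H1 H2] := H _ jk.
rewrite -(odd_double_half i); case: (odd i) => /=.
  by rewrite add1n E2.
by rewrite add0n E1.
Qed.

End reindex.

Theorem lemmaF4 (R : realType) (sigma : R) (N h : nat)
    (d : measure_display) (T : measurableType d) (P : probability T R)
    (d' : measure_display) (T' : measurableType d') (Q : probability T' R)
    (K : nat -> R.-pker R ~> (R * R)%type)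
    (alpha : nat -> T -> R) (omega : 'I_N -> T' -> R) :
  sigma != 0 ->
  (N <= 2 ^ h)%N ->
  (forall h' : nat, (N <= 2 ^ h')%N -> (h <= h')%N) ->
  (forall k : nat, (0 < k < 2 ^ h.+1)%N -> measurable_fun [set: T] (alpha k)) ->
  law_of_iid_sum sigma (2 ^ h) (fun B => P (alpha 1%N @^-1` B)) ->
  (forall l : nat, (l < h)%N -> is_split_cond_distr sigma (2 ^ (h - l.+1)) (fun a B => K l a B)) ->
  (forall l : nat, (l < h)%N ->
     forall (A : set ((2 ^ l.+1 - 1).-tuple R)) (B : 'I_(2 ^ l) -> set (R * R)%type),
       measurable A -> (forall j, measurable (B j)) ->
       P (tree_prefix alpha l @^-1` A `&`
          \bigcap_(j : 'I_(2 ^ l))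
             ((fun t => (alpha (2 * (2 ^ l + j))%N t, alpha (2 * (2 ^ l + j)).+1 t))
                @^-1` B j))
       = (\int[P]_(t in tree_prefix alpha l @^-1` A)
            \prod_(j < 2 ^ l) K l (alpha (2 ^ l + j)%N t) (B j))%E) ->
  iid_omega0 Q sigma omega ->
  forall A : set (N.+1.-tuple R), measurable A ->
    P ((fun t => [tuple \sum_(i < 2 ^ h | (i < x)%N) alpha (2 ^ h + i)%N t | x < N.+1])
         @^-1` A)
    = Q ((fun t => [tuple dotN (fun i => omega i t) (pi1 N x) | x < N.+1]) @^-1` A).
Proof.
move=> s0 hN hmin malpha law1 Ksplit Hcond iidQ A mA.
have malpha' l j : (l <= h)%N -> (j < 2 ^ l)%N -> measurable_fun setT (alpha (2 ^ l + j)%N).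
  move=> lh jl; apply: malpha.
  have : (2 ^ l <= 2 ^ h)%N by rewrite leq_pexp2l.
  have : (0 < 2 ^ l)%N by rewrite expn_gt0.
  rewrite expnS; lia.
pose Claim l := exists mu, law_of_iid_sum sigma (2 ^ (h - l)) mu /\
  natform P (2 ^ l) (fun j => alpha (2 ^ l + j)%N) mu.
have base : Claim 0%N.
  exists (fun B => P (alpha 1%N @^-1` B)); split; first by rewrite subn0.
  move=> B mB; rewrite expn0 big_nat1.
  congr (P _); apply/seteqP; split => [t H|t H j /= j1].
    by have := H 0%N erefl; rewrite addn0.
  by have -> : j = 0%N by lia.
have step l : (l < h)%N -> Claim l -> Claim l.+1.
  move=> lh [mu [lawmu nfmu]].
  have [dW [TW [PW [Z [iZ Hc]]]]] := Ksplit l lh.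
  move: Hc => /= Hc.
  have mu1 : mu setT = 1%E := lawsum_setT _ _ _ lawmu.
  have [mZ mgZ ipZ] := iZ.
  pose m := (2 ^ (h - l.+1))%N.
  pose Y1 := fun t => \sum_(i < m + m | (i < m)%N) Z i t.
  pose Y2 := fun t => \sum_(i < m + m | (m <= i)%N) Z i t.
  pose S := fun t => Y1 t + Y2 t.
  pose mu' := fun C => PW (Y1 @^-1` C).
  have e : (2 ^ (h - l) = m + m)%N.
    by rewrite /m -(subnSK lh) expnS mul2n addnn.
  have lawmu' : law_of_iid_sum sigma (2 ^ (h - l.+1)) mu'.
    exists dW, TW, PW, (fun i => Z (lshift m i)); split; first exact: iid_subl.
    move=> B mB; rewrite /mu'; congr (PW _); apply/seteqP; split => t;
      by rewrite /= /Y1 sum_splitl.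
  have Y1E : Y1 = sumt \o vec (fun i => Z (lshift m i)).
    by rewrite vec_sumt; apply: funext => t; rewrite /Y1 sum_splitl.
  have Y2E : Y2 = sumt \o vec (fun i => Z (rshift m i)).
    by rewrite vec_sumt; apply: funext => t; rewrite /Y2 sum_splitr.
  have SE : S = (fun t => \sum_(i < m + m) Z i t).
    by apply: funext => t; rewrite /S /Y1 /Y2 sum_split.
  have mS : measurable_fun setT S by rewrite SE; apply: measurable_sum.
  have mY1 : measurable_fun setT Y1.
    by rewrite Y1E; apply: measurableT_comp; [exact: measurable_sumt|apply: measurable_vec].
  have mY2 : measurable_fun setT Y2.
    by rewrite Y2E; apply: measurableT_comp; [exact: measurable_sumt|apply: measurable_vec].
  have Y1F : Y1 = (fun t => \sum_(i < m) Z (lshift m i) t).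
    by apply: funext => t; rewrite /Y1 sum_splitl.
  have Y2F : Y2 = (fun t => \sum_(i < m) Z (rshift m i) t).
    by apply: funext => t; rewrite /Y2 sum_splitr.
  have E1 C C' : measurable C -> measurable C' ->
      PW ((fun t => (Y1 t, Y2 t)) @^-1` (C `*` C')) = (mu' C * mu' C')%E.
    move=> mC mC'.
    have mpC : measurable (@sumt R m @^-1` C).
      by rewrite -[X in measurable X]setTI; exact: measurable_sumt.
    have mpC' : measurable (@sumt R m @^-1` C').
      by rewrite -[X in measurable X]setTI; exact: measurable_sumt.
    have H := block_indep PW Z mZ ipZ _ _ mpC mpC'.
    have -> : (fun t => (Y1 t, Y2 t)) @^-1` (C `*` C') =
        vec (fun i => Z (lshift m i)) @^-1` (sumt @^-1` C) `&`
        vec (fun i => Z (rshift m i)) @^-1` (sumt @^-1` C').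
      by rewrite Y1E Y2E.
    rewrite H /mu'; congr (_ * _)%E; first by rewrite Y1E.
    have := sum_law PW PW sigma (fun i => Z (rshift m i)) (fun i => Z (lshift m i))
      (iid_subr PW sigma Z iZ) (iid_subl PW sigma Z iZ) C' mC'.
    rewrite -(vec_sumt (fun i => Z (rshift m i))) -(vec_sumt (fun i => Z (lshift m i))).
    by rewrite Y1E.
  have E2 (j : 'I_(2 ^ l)) (f : R -> \bar R) : measurable_fun setT f -> (forall x, 0 <= f x)%E ->
      (\int[P]_t f (alpha (2 ^ l + j)%N t) = \int[PW]_w f (S w))%E.
    move=> mf f0.
    have ma := malpha' l j (ltnW lh) (ltn_ord j).
    transitivity (\int[distribution P (mk_mfun ma)]_y f y)%E.
      by rewrite ge0_integral_distribution.
    transitivity (\int[distribution PW (mk_mfun mS)]_y f y)%E; last first.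
      by rewrite ge0_integral_distribution.
    apply: eq_measure_integral => C mC _.
    change (P (alpha (2 ^ l + j)%N @^-1` C) = PW (S @^-1` C)).
    have := natform_marg P nfmu mu1 j C mC; rewrite /= => ->.
    have lm := lawmu; rewrite e in lm.
    by rewrite (lawsum_eq _ _ _ lm _ _ PW Z iZ C mC) SE.
  have E3 (B : set (R * R)) : measurable B ->
      PW ((fun t => (Y1 t, Y2 t)) @^-1` B) = (\int[PW]_w K l (S w) B)%E.
    move=> mB; have := Hc setT B measurableT mB.
    by rewrite !preimage_setT setTI.
  exists mu'; split => // B mB.
  have e2 : (2 ^ l.+1 = (2 ^ l).*2)%N by rewrite expnS mul2n.
  pose B' := fun j : 'I_(2 ^ l) => B (j.*2)%N `*` B (j.*2.+1)%N.
  have mB' j : measurable (B' j) by apply: measurableX.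
  have capE : \bigcap_(i in `I_(2 ^ l.+1)) (alpha (2 ^ l.+1 + i)%N @^-1` B i) =
      tree_prefix alpha l @^-1` setT `&` \bigcap_(j : 'I_(2 ^ l))
        ((fun t => (alpha (2 * (2 ^ l + j))%N t, alpha (2 * (2 ^ l + j)).+1 t)) @^-1` B' j).
    rewrite preimage_setT setTI e2.
    rewrite (cap_pairs (fun i => alpha ((2 ^ l).*2 + i)%N)
       (fun j => alpha (2 * (2 ^ l + j))%N) (fun j => alpha (2 * (2 ^ l + j)).+1) (2 ^ l) B);
      last 2 first.
    - by move=> j; congr alpha; lia.
    - by move=> j; congr alpha; lia.
    apply/seteqP; split => [t H j _|t H j /= jl].
      exact: (H j (ltn_ord j)).
    exact: (H (Ordinal jl) I).
  change (P (\bigcap_(i in `I_(2 ^ l.+1)) (alpha (2 ^ l.+1 + i)%N @^-1` B i)) =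
     \prod_(0 <= j < 2 ^ l.+1) mu' (B j))%E.
  rewrite capE Hcond //.
  rewrite preimage_setT.
  have mX j : measurable_fun setT ((fun j : 'I_(2 ^ l) => alpha (2 ^ l + j)%N) j).
    exact: (malpha' l j (ltnW lh) (ltn_ord j)).
  rewrite (E_prod P (fun j : 'I_(2 ^ l) => alpha (2 ^ l + j)%N) mX
     (natform_indep P nfmu mu1) (fun j a => K l a (B' j))); last 2 first.
  - by move=> j; apply: measurable_kernel.
  - by move=> j x; apply: measure_ge0.
  rewrite e2 prod_pairs big_mkord; apply: eq_bigr => j _.
  rewrite (E2 j (fun a => K l a (B' j))); last 2 first.
  - by apply: measurable_kernel.
  - by move=> x; apply: measure_ge0.
  by rewrite -E3 // E1.
have [mu [lawh nfh]] : Claim h.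
  have : forall l, (l <= h)%N -> Claim l.
    elim => [|l IH] lh; first exact: base.
    by apply: step => //; apply: IH; apply: ltnW.
  by apply.
have mu1 : mu setT = 1%E := lawsum_setT _ _ _ lawh.
rewrite subnn expn0 in lawh.
have muE C : measurable C -> mu C = omega0 sigma C.
  move: lawh => [d0 [T0 [P0 [Z0 [[mZ0 mg0 ip0] muE]]]]] mC.
  rewrite muE //.
  have -> : (fun t => \sum_(i < 1) Z0 i t) = Z0 ord0.
    by apply: funext => t; rewrite big_ord1.
  exact: mg0.
pose XN := fun i : 'I_N => alpha (2 ^ h + i)%N.
have mXN i : measurable_fun setT (XN i).
  by apply: malpha' => //; exact: (leq_trans (ltn_ord i) hN).
have HXN (B : 'I_N -> set R) : (forall i, measurable (B i)) ->
    P (\bigcap_(i in [set: 'I_N]) (XN i @^-1` B i)) = (\prod_(i < N) omega0 sigma (B i))%E.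
  move=> mB.
  pose Bn k := oapp B setT (insub k : option 'I_N).
  have mBn k : measurable (Bn k) by rewrite /Bn; case: insub => //=.
  have := nfh Bn mBn.
  have -> : \bigcap_(j in `I_(2 ^ h)) (alpha (2 ^ h + j)%N @^-1` Bn j) =
            \bigcap_(i in [set: 'I_N]) (XN i @^-1` B i).
    apply/seteqP; split => [t H i _|t H k /= kh].
      by have := H i (leq_trans (ltn_ord i) hN); rewrite /Bn valK.
    rewrite /Bn; case: insubP => [u _ uk|_] //=.
    by rewrite -uk; exact: H.
  move=> ->; rewrite (big_cat_nat (leq0n N) hN) /=.
  rewrite [X in (_ * X)%E]big_nat_cond [X in (_ * X)%E]big1 ?mule1; last first.
    move=> k /andP[/andP[Nk _] _]; rewrite /Bn insubN //=; last by rewrite -leqNgt.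
  rewrite big_mkord; apply: eq_bigr => i _.
  by rewrite /Bn valK /= muE.
have mom : forall i, measurable_fun setT (omega i) by case: iidQ.
have HQ (B : 'I_N -> set R) : (forall i, measurable (B i)) ->
    P (\bigcap_(i in [set: 'I_N]) (XN i @^-1` B i)) =
    Q (\bigcap_(i in [set: 'I_N]) (omega i @^-1` B i)).
  move=> mB; rewrite HXN //; case: iidQ => _ mgQ ipQ; rewrite ipQ //.
  by apply: eq_bigr => i _; rewrite mgQ.
have law_eq := law_rect P Q XN omega mXN mom HQ.
pose ps := fun v : N.-tuple R => [tuple \sum_(i < N | (i < x)%N) tnth v i | x < N.+1].
have mps : measurable_fun setT ps.
  apply/measurable_fun_tnthP => x.
  have -> : (@tnth N.+1 R)^~ x \o ps =
      (fun v : N.-tuple R => \sum_(i < N) (if (i < x)%N then tnth v i else 0)).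
    by apply: funext => v /=; rewrite tnth_mktuple big_mkcond.
  apply: measurable_sum => i; case: (i < x)%N; [exact: measurable_tnth|exact: measurable_cst].
have mpA : measurable (ps @^-1` A) by rewrite -[X in measurable X]setTI; exact: mps.
have W (F : nat -> R) x n2 : (x <= n2)%N ->
    \sum_(0 <= i < n2 | (i < x)%N) F i = \sum_(0 <= i < x) F i.
  by move=> xn; rewrite (big_nat_widen 0 x n2 xpredT).
have E1 : (fun t => [tuple \sum_(i < 2 ^ h | (i < x)%N) alpha (2 ^ h + i)%N t | x < N.+1])
    = ps \o vec XN.
  apply: funext => t; apply: eq_from_tnth => x; rewrite /= !tnth_mktuple.
  under [RHS]eq_bigr do rewrite tnth_mktuple.
  have xN : (x <= N)%N by rewrite -ltnS.
  rewrite /XN -!(big_mkord (fun i => (i < x)%N) (fun i => alpha (2 ^ h + i)%N t)).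
  by rewrite W ?(leq_trans xN hN) // W.
have E2 : (fun t => [tuple dotN (fun i => omega i t) (pi1 N x) | x < N.+1])
    = ps \o vec omega.
  apply: funext => t; apply: eq_from_tnth => x; rewrite /= !tnth_mktuple.
  rewrite /dotN /pi1 [RHS]big_mkcond; apply: eq_bigr => i _.
  by rewrite tnth_mktuple; case: ifP => _; rewrite ?mulr1 ?mulr0.
rewrite E1 E2.
exact: (law_eq _ mpA).
Qed.
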